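(* Let $\mathbb{G}$ be an undirected, unweighted random network model that is of finite expected degree (FED). Then $\mathbb{G}$ is uniformly sparse (US).
   Context: A random network model $\mathbb{G}$ assigns to every $n\in\mathbb{N}$ a probability distribution over graphs with $n$ nodes; $G_n$ denotes a graph sampled from it. ''For all sufficiently large $n$'' refers to this index. For a node $u$, $\deg(u)$ is its degree. Let $\boldsymbol{p}_n(d)$ be the probability that $\deg(u)=d$ when $G_n$ is sampled from $\mathbb{G}$ and $u$ is chosen uniformly at random from $G_n$. $\mathbb{G}$ is FED if there is a probability distribution $\boldsymbol{p}$ on $\mathbb{N}$ with finite mean such that (F1) $\lim_{n\to\infty}\boldsymbol{p}_n(d)=\boldsymbol{p}(d)$ for each $d\in\mathbb{N}$, and (F2) $\lim_{n\to\infty}\sum_d d\,\boldsymbol{p}_n(d)=\sum_d d\,\boldsymbol{p}(d)$. A set of nodes $U$ is a node cover of a set of edges $E$ if every edge of $E$ is incident with at least one node of $U$. $\mathbb{G}$ is US if for each $\epsilon>0$ there is a constant $C_\epsilon$ such that for all sufficiently large $n$ the following holds with probability at least $1-\epsilon$: for any set of $y\ge \epsilon n$ edges of $G_n$, every node cover of that set has size at least $y/C_\epsilon$. *)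

(* Defs.v *)
From HB Require Import structures.
From mathcomp Require Import all_boot all_order all_algebra.
From mathcomp Require Import all_classical all_reals.
From mathcomp Require Import topology normedtype sequences.
Set Implicit Arguments. Unset Strict Implicit. Unset Printing Implicit Defensive.
Import Order.TTheory GRing.Theory Num.Theory.
Import numFieldNormedType.Exports.
Local Open Scope classical_set_scope.
Local Open Scope ring_scope.

(* A graph on the node set 'I_n is given by its edge set: a set of
   2-element subsets of 'I_n (undirected, unweighted, no loops, no
   multi-edges). *)
Definition edgeset (n : nat) := {set {set 'I_n}}.

Definition simple_graph (n : nat) (G : edgeset n) : bool :=
  [forall e in G, #|e| == 2%N].

Definition deg (n : nat) (G : edgeset n) (u : 'I_n) : nat :=
  #|[set e in G | u \in e]|.

Definition random_network_model (R : realType)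
    (P : forall n : nat, {ffun edgeset n -> R}) : Prop :=
  forall n : nat,
    [/\ forall G, 0 <= P n G,
        \sum_(G : edgeset n) P n G = 1
      & forall G, P n G != 0 -> simple_graph G].

(* p_n(d): probability that a uniformly random node of G_n has degree d. *)
Definition pdeg (R : realType) (P : forall n : nat, {ffun edgeset n -> R})
    (n d : nat) : R :=
  \sum_(G : edgeset n) P n G * (#|[set u : 'I_n | deg G u == d]|%:R / n%:R).

(* expected degree  sum_d d * p_n(d)  (degrees are < n, so the sum is finite) *)
Definition mean_deg (R : realType) (P : forall n : nat, {ffun edgeset n -> R})
    (n : nat) : R :=
  \sum_(d < n.+1) d%:R * pdeg P n d.

Definition FED (R : realType) (P : forall n : nat, {ffun edgeset n -> R}) : Prop :=
  exists (p : nat -> R) (m : R),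
    [/\ (forall d, 0 <= p d),
        series p k @[k --> \oo] --> (1 : R),
        series (fun d => d%:R * p d) k @[k --> \oo] --> m,
        (forall d, pdeg P n d @[n --> \oo] --> p d)
      & mean_deg P n @[n --> \oo] --> m ].

Definition node_cover (n : nat) (U : {set 'I_n}) (F : edgeset n) : bool :=
  [forall e in F, ~~ [disjoint e & U]].

Definition US_event (R : realType) (eps C : R) (n : nat) (G : edgeset n) : bool :=
  [forall F : edgeset n,
     (F \subset G) ==> (eps * n%:R <= #|F|%:R) ==>
     [forall U : {set 'I_n}, node_cover U F ==> (#|F|%:R / C <= #|U|%:R)]].

Definition US (R : realType) (P : forall n : nat, {ffun edgeset n -> R}) : Prop :=
  forall eps : R, 0 < eps ->
    exists C : R, 0 < C /\
      exists N : nat, forall n : nat, (N <= n)%N ->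
        1 - eps <= \sum_(G : edgeset n | US_event eps C G) P n G.

(* Main.v *)
Require Import Defs.
From mathcomp Require Import all_boot all_algebra all_classical all_reals.
From mathcomp Require Import all_order topology normedtype sequences.
From mathcomp Require Import zify ring lra.
Import Order.TTheory GRing.Theory Num.Theory.
Import numFieldNormedType.Exports.
Definition Tk {n : nat} (K : nat) (G : edgeset n) : nat :=
  \sum_(u : 'I_n) (if (K <= deg G u)%N then deg G u else 0%N).

Lemma deg_le n (G : edgeset n) u : simple_graph G -> (deg G u <= n)%N.
Proof.
move=> /forallP sG; rewrite /deg.
have h := leq_imset_card (fun v : 'I_n => [set u; v]) 'I_n.
rewrite card_ord in h; apply: leq_trans h; apply: subset_leq_card. apply/fintype.subsetP => e.
rewrite inE => /andP [eG ue].
have := implyP (sG e) eG => /cards2P [x [y [_ exy]]].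
apply/imsetP; move: ue; rewrite exy !inE => /orP [/eqP ux|/eqP uy].
  by exists y => //; rewrite ux.
by exists x => //; rewrite uy finset.setUC.
Qed.

Lemma sum_ind x K M :
  (\sum_(K <= d < M) d * (x == d) = if (K <= x) && (x < M) then x else 0)%N.
Proof.
elim: M => [|M IH]; first by rewrite big_geq // ltn0 andbF.
case: (leqP K M) => h.
  rewrite big_nat_recr //= IH.
  have [->|ne] := eqVneq x M.
    by rewrite ltnn andbF h leqnn muln1.
  by rewrite muln0 addn0 ltnS [(x <= M)%N]leq_eqVlt (negbTE ne).
rewrite big_geq //; case: ifP => //; lia.
Qed.

Lemma card_sum n (G : edgeset n) d :
  #|[set u : 'I_n | deg G u == d]| = (\sum_(u : 'I_n) (deg G u == d))%N.
Proof.
rewrite -sum1_card big_mkcond /=; apply: eq_bigr => u _.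
by rewrite inE; case: (deg G u == d).
Qed.

Lemma Tk_eq n K (G : edgeset n) : (forall u, deg G u <= n)%N ->
  Tk K G = (\sum_(K <= d < n.+1) d * #|[set u : 'I_n | deg G u == d]|)%N.
Proof.
move=> H.
under [RHS]eq_bigr do rewrite card_sum big_distrr /=.
rewrite exchange_big /Tk; apply: eq_bigr => u _.
by rewrite sum_ind ltnS H andbT.
Qed.

Lemma cover_bound n (G F : edgeset n) (U : {set 'I_n}) K :
  F \subset G -> node_cover U F -> (#|F| <= K * #|U| + Tk K G)%N.
Proof.
move=> FG /forallP cov.
have step1 : (#|F| <= \sum_(u in U) #|[set e in F | u \in e]|)%N.
  have -> : (\sum_(u in U) #|[set e in F | u \in e]| =
            \sum_(u in U) \sum_(e in F) (u \in e))%N.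
    apply: eq_bigr => u _; rewrite -sum1_card big_mkcond /= [RHS]big_mkcond /=.
    by apply: eq_bigr => e _; rewrite !inE; case: (e \in F); case: (u \in e).
  rewrite exchange_big /= -sum1_card; apply: leq_sum => e eF.
  have := implyP (cov e) eF; rewrite -setI_eq0 => /set0Pn [u].
  rewrite inE => /andP [ue uU].
  by rewrite (bigD1 u) //= ue.
apply: (leq_trans step1).
apply: (@leq_trans (\sum_(u in U) (K + (if (K <= deg G u)%N then deg G u else 0%N)))).
  apply: leq_sum => u _.
  apply: (@leq_trans (deg G u)).
    apply: subset_leq_card; apply/fintype.subsetP => e; rewrite !inE => /andP [eF ->].
    by rewrite (fintype.subsetP FG e eF).
  case: (leqP K (deg G u)) => h; [exact: leq_addl | by rewrite addn0 ltnW].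
rewrite big_split /= sum_nat_const mulnC leq_add2l /Tk.
rewrite [X in (_ <= X)%N](bigID (fun u => u \in U)) /=; exact: leq_addr.
Qed.

Local Open Scope classical_set_scope.
Local Open Scope ring_scope.
Lemma card_cl n (G : edgeset n) d :
  #|[set u : 'I_n | deg G u == d]| = #|[set u : 'I_n | deg G u == d]%SET|.
Proof.
apply: eq_card => u; rewrite inE; apply/idP/idP; rewrite in_setE //.
Qed.

Lemma mean_split (R : realType) (P : forall n : nat, {ffun edgeset n -> R}) n K :
  random_network_model P -> (K <= n.+1)%N ->
  mean_deg P n - \sum_(d < K) d%:R * pdeg P n d =
  \sum_(G : edgeset n) P n G * ((Tk K G)%:R / n%:R).
Proof.
move=> model hK.
rewrite /mean_deg -!(big_mkord xpredT (fun d => d%:R * pdeg P n d)).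
rewrite (big_cat_nat (leq0n K) hK) /= addrAC subrr add0r.
rewrite /pdeg.
under eq_bigr do rewrite mulr_sumr.
rewrite exchange_big /=; apply: eq_bigr => G _.
have [->|nz] := eqVneq (P n G) 0.
  by rewrite mul0r big1 // => d _; rewrite mul0r mulr0.
have sG : simple_graph G by case: (model n) => _ _ /(_ G nz).
rewrite (@Tk_eq n K G (fun u => @deg_le n G u sG)) natr_sum mulr_suml mulr_sumr.
apply: eq_bigr => d _; rewrite natrM card_cl; ring.
Qed.

Lemma cvg_fsum (R : realType) (f : nat -> nat -> R) (l : nat -> R) K :
  (forall d, f n d @[n --> \oo] --> l d) ->
  \sum_(d < K) f n d @[n --> \oo] --> \sum_(d < K) l d.
Proof.
move=> H; elim: K => [|K IH].
  under eq_fun do rewrite big_ord0. rewrite big_ord0; exact: cvg_cst.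
under eq_fun do rewrite big_ord_recr /=. rewrite big_ord_recr /=.
exact: cvgD.
Qed.

Lemma ev (P : nat -> Prop) : (\forall n \near \oo, P n) -> exists N, forall n, (N <= n)%N -> P n.
Proof. by case=> N _ HN; exists N. Qed.

Theorem lemma1 (R : realType) (P : forall n : nat, {ffun edgeset n -> R}) :
  random_network_model P -> FED P -> US P.
Proof.
move=> model [p [m [_ _ Hser Hp Hmean]]] eps eps0.
have Pge0 n G : 0 <= P n G by case: (model n).
case: (lerP 1 eps) => [eps1 | eps1].
  exists 1; split => //; exists 0%N => n _.
  have : 0 <= \sum_(G : edgeset n | US_event eps 1 G) P n G by apply: sumr_ge0.
  lra.
set dl := eps * eps / 2.
have dl0 : 0 < dl by rewrite /dl; apply: divr_gt0 => //; apply: mulr_gt0.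
have [K HK] := ev _ (cvgr_gt _ Hser (m - dl / 2) ltac:(lra)).
have hK := HK K (leqnn K).
rewrite /series /= big_mkord in hK.
have Hlim : (fun n => mean_deg P n - \sum_(d < K) d%:R * pdeg P n d) @ \oo -->
    m - \sum_(d < K) d%:R * p d.
  apply: cvgB => //.
  exact: (@cvg_fsum R (fun n d => d%:R * pdeg P n d) (fun d => d%:R * p d) K (fun d => cvgMr (Hp d))).
have [N0 HN0] := ev _ (cvgr_lt _ Hlim dl ltac:(lra)).
exists (2 * K%:R + 2); split; first by have : 0 <= K%:R :> R by []; lra.
exists (maxn N0 (maxn K 1)) => n.
rewrite !geq_max => /and3P [hN0 hKn hn1].
have hh := HN0 n hN0; rewrite /= in hh.
rewrite (@mean_split R P n K model (leqW hKn)) in hh.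
have npos : 0 < n%:R :> R by rewrite ltr0n.
have hE : \sum_(G : edgeset n) P n G * (Tk K G)%:R < dl * n%:R.
  rewrite -ltr_pdivrMr // mulr_suml.
  by under eq_bigr do rewrite -mulrA.
set B := fun G : edgeset n => (Tk K G)%:R <= eps * n%:R / 2 :> R.
have hm : (\sum_(G | ~~ B G) P n G) * (eps * n%:R / 2) <=
          \sum_(G : edgeset n) P n G * (Tk K G)%:R.
  rewrite mulr_suml.
  apply: (le_trans (y := \sum_(G | ~~ B G) P n G * (Tk K G)%:R)).
    apply: ler_sum => G nB; apply: ler_wpM2l => //.
    by move: nB; rewrite /B -ltNge => /ltW.
  rewrite [X in _ <= X](bigID B) /= lerDr; apply: sumr_ge0 => G _.
  by apply: mulr_ge0.
have en : 0 < eps * n%:R by apply: mulr_gt0.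
have hs : \sum_(G | ~~ B G) P n G < eps.
  rewrite /dl in hE; nra.
have hsub : \sum_(G | B G) P n G <=
            \sum_(G | US_event eps (2 * K%:R + 2) G) P n G.
  rewrite [X in X <= _]big_mkcond [X in _ <= X]big_mkcond /=; apply: ler_sum => G _.
  case: ifP => hB; last by case: ifP.
  suff -> : US_event eps (2 * K%:R + 2) G by [].
  apply/forallP => F; apply/implyP => FG; apply/implyP => Fbig.
  apply/forallP => U; apply/implyP => cov.
  have cb := @cover_bound n G F U K FG cov.
  have cbR : #|F|%:R <= K%:R * #|U|%:R + (Tk K G)%:R :> R.
    by rewrite -natrM -natrD ler_nat.
  have K0 : 0 <= K%:R :> R by [].
  have U0 : 0 <= #|U|%:R :> R by [].
  rewrite ler_pdivrMr; last by lra.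
  rewrite /B in hB; nra.
have tot : \sum_(G : edgeset n) P n G = 1 by case: (model n).
move: tot; rewrite (bigID B) /= => tot.
lra.
Qed.
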